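(* Let $\{\Theta_i\subset\mathbb{R}^r\}_{i=1}^K$ be a set of $K$ parameter spaces ($K>1$), $d_i$ the VC dimension of $\Theta_i$, and $\Theta=\bigcup_{i=1}^K\Theta_i$ with VC dimension $d$. Let $T$ and $S$ be samples of size $N$ from distributions $\mathbb{T}$ and $\mathbb{S}$, respectively, and let $\hat{\mathrm{Div}}(T,S)$ be the empirical $\mathcal{H}$-divergence between the samples. Then in the parameter space $\Theta$, for any $\delta\in(0,1)$, with probability at least $1-\delta$, \[ \mathrm{Div}(\mathbb{T},\mathbb{S})\le\hat{\mathrm{Div}}(T,S)+\max_{i\in[1,K]}4\sqrt{\frac{d_i\ln(2N)+\ln(2K/\delta)}{2N}}. \]
   Context: The hypotheses $h:\mathcal{X}\to\{0,1\}$ are the prediction functions parameterized by the parameter space; $I(h)=\{x:h(x)=1\}$. The $\mathcal{H}$-divergence is $\mathrm{Div}(\mathbb{T},\mathbb{S})=2\sup_{h}|\mathcal{P}_{\mathbb{T}}(I(h))-\mathcal{P}_{\mathbb{S}}(I(h))|$, and the empirical $\mathcal{H}$-divergence $\hat{\mathrm{Div}}(T,S)$ is the same quantity with $\mathcal{P}_{\mathbb{T}},\mathcal{P}_{\mathbb{S}}$ replaced by the empirical distributions of the samples $T,S$. *)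

(* Defs.v *)
From HB Require Import structures.
From mathcomp Require Import all_boot all_order all_algebra.
From mathcomp Require Import all_classical all_reals all_analysis.
Set Implicit Arguments. Unset Strict Implicit. Unset Printing Implicit Defensive.
Import Order.TTheory GRing.Theory Num.Theory.
Import numFieldNormedType.Exports.
Local Open Scope classical_set_scope.
Local Open Scope ring_scope.

Definition shatters {X : eqType} (H : set (X -> bool)) (s : seq X) : Prop :=
  forall f : X -> bool, exists2 h, H h & forall x, x \in s -> h x = f x.

Definition is_VCdim {X : eqType} (H : set (X -> bool)) (d : nat) : Prop :=
  (exists s : seq X, [/\ uniq s, size s = d & shatters H s]) /\
  (forall s : seq X, uniq s -> shatters H s -> (size s <= d)%N).

Definition hclass {R : realType} {r : nat} {X : Type}
  (hp : 'rV[R]_r -> X -> bool) (Th : set 'rV[R]_r) : set (X -> bool) :=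
  hp @` Th.

Definition Iset {X : Type} (h : X -> bool) : set X := [set x | h x].

Definition Hdiv {R : realType} {d : measure_display} {X : measurableType d}
  (PT PS : probability X R) (H : set (X -> bool)) : R :=
  2 * sup [set `|fine (PT (Iset h)) - fine (PS (Iset h))| | h in H].

Definition emp_prob {R : realType} {X : Type} {N : nat}
  (xs : 'I_N -> X) (h : X -> bool) : R :=
  (\sum_(j < N) (h (xs j))%:R) / N%:R.

Definition emp_Hdiv {R : realType} {X : Type} {N : nat}
  (ts ss : 'I_N -> X) (H : set (X -> bool)) : R :=
  2 * sup [set `|emp_prob ts h - emp_prob ss h : R| | h in H].

(* Xs_1..Xs_N, Ys_1..Ys_N are mutually independent random variables on
   (Omega, P), each Xs_j with law PT and each Ys_j with law PS. *)
Definition iid_samples {R : realType} {dO dX : measure_display}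
  {Omega : measurableType dO} {X : measurableType dX} {N : nat}
  (P : probability Omega R) (Xs Ys : 'I_N -> Omega -> X)
  (PT PS : probability X R) : Prop :=
  [/\ (forall j, measurable_fun setT (Xs j)),
      (forall j, measurable_fun setT (Ys j)) &
      forall A B : 'I_N -> set X,
        (forall j, measurable (A j)) -> (forall j, measurable (B j)) ->
        P ((\bigcap_(j in [set: 'I_N]) (Xs j @^-1` A j)) `&`
           (\bigcap_(j in [set: 'I_N]) (Ys j @^-1` B j))) =
        ((\prod_(j < N) fine (PT (A j))) * (\prod_(j < N) fine (PS (B j))))%:E].

(* Main.v *)
Require Import Defs.
From HB Require Import structures.
From mathcomp Require Import all_boot all_order all_algebra.
From mathcomp Require Import all_classical all_reals all_analysis.
From mathcomp Require Import ring lra zify.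
Import Order.TTheory GRing.Theory Num.Theory.
Import numFieldNormedType.Exports.
Local Open Scope classical_set_scope.
Local Open Scope ring_scope.

Lemma fact_ineq (n : nat) : (2 ^ n * n`! <= (2 * n)`!)%N.
Proof.
elim: n => [//|n IH].
have -> : (2 * n.+1 = (2 * n).+2)%N by lia.
rewrite !factS expnS.
have h1 : (1 <= (2*n).+1)%N by [].
nia.
Qed.

Section S.
Variable R : realType.

Lemma cosh_le (u : R) : expR u + expR (- u) <= 2 * expR (u ^+ 2 / 2).
Proof.
set c := fun k : nat => u ^+ k / k`!%:R + (- u) ^+ k / k`!%:R.
set b := fun k : nat => (u ^+ 2 / 2) ^+ k / k`!%:R.
have c_even m : c (2 * m)%N = 2 * (u ^+ (2 * m) / (2 * m)`!%:R).
  by rewrite /c !exprM sqrrN; ring.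
have c_odd m : c (2 * m).+1 = 0.
  by rewrite /c exprS [(- u) ^+ _]exprS !exprM sqrrN; ring.
have c_ge0 k : 0 <= c k.
  rewrite -(odd_double_half k); case: (odd k); rewrite /= -muln2 mulnC.
    by rewrite add1n c_odd.
  rewrite add0n c_even; apply: mulr_ge0 => //; apply: divr_ge0 => //.
  by rewrite exprM exprn_ge0 // sqr_ge0.
have key n : \sum_(0 <= k < 2 * n) c k <= 2 * \sum_(0 <= k < n) b k.
  elim: n => [|n IH]; first by rewrite muln0 !big_geq.
  have -> : (2 * n.+1 = (2 * n).+2)%N by lia.
  rewrite !big_nat_recr //= c_odd addr0 c_even mulrDr lerD //.
  rewrite ler_pM2l // /b expr_div_n -exprM.
  have hu : 0 <= u ^+ (2 * n) by rewrite exprM exprn_ge0 // sqr_ge0.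
  rewrite -mulrA -invfM; apply: (ler_wpM2l hu).
  rewrite lef_pV2 ?posrE ?mulr_gt0 ?exprn_gt0 // ?ltr0n ?fact_gt0 //.
  by rewrite -natrX -natrM ler_nat fact_ineq.
have mono n : \sum_(0 <= k < n) c k <= \sum_(0 <= k < 2 * n) c k.
  have hn : (n <= 2 * n)%N by lia.
  rewrite [leRHS](big_cat_nat (leq0n n) hn) /=.
  by rewrite lerDl sumr_ge0.
rewrite /expR -limD; [|exact: is_cvg_series_exp_coeff|exact: is_cvg_series_exp_coeff].
rewrite (_ : 2 * limn (series (exp_coeff (u ^+ 2 / 2))) = limn ((2 : R) *: series (exp_coeff (u ^+ 2 / 2)))); last first.
  by rewrite limZl_tmp //; exact: is_cvg_series_exp_coeff.
apply: ler_lim.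
- apply: is_cvgD; exact: is_cvg_series_exp_coeff.
- apply: is_cvgZr; exact: is_cvg_series_exp_coeff.
near=> n.
rewrite /series /= !fctE -big_split /=. exact: (le_trans (mono n) (key n)).
Unshelve. all: end_near.
Qed.

Lemma expR_ge1Dx' (x : R) : 1 + x <= expR x.
Proof. exact: expR_ge1Dx. Qed.

Lemma mgf_bern (p s : R) : 0 <= p <= 1 ->
  p * expR (s * (1 - p)) + (1 - p) * expR (s * (0 - p)) <= expR (s ^+ 2 / 4).
Proof.
move=> /andP[p0 p1].
set E := expR (- (s * p)).
have E0 : 0 < E by apply: expR_gt0.
have h1 : E * (1 + s * p) <= 1.
  have : 1 + s * p <= expR (s * p) by apply: expR_ge1Dx.
  have eq1 : E * expR (s * p) = 1 by rewrite /E -expRD addNr expR0.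
  move=> h; rewrite -[leRHS]eq1; exact: (ler_wpM2l (ltW E0) h).
have h2 : E * (1 + (- s + s * p)) <= expR (- s).
  have -> : expR (- s) = E * expR (- s + s * p) by rewrite /E -expRD; congr expR; ring.
  apply: (ler_wpM2l (ltW E0)); exact: expR_ge1Dx.
have hJ : E <= (1 - p) + p * expR (- s) by nra.
have es : expR s * expR (- s) = 1 by rewrite -expRD subrr expR0.
have -> : p * expR (s * (1 - p)) + (1 - p) * expR (s * (0 - p)) = E * (p * expR s + (1 - p)).
  rewrite /E (_ : s * (1 - p) = s + - (s * p)); last by ring.
  rewrite expRD (_ : s * (0 - p) = - (s * p)); last by ring.
  ring.
have eS0 : 0 < expR s by apply: expR_gt0.
have eN0 : 0 < expR (- s) by apply: expR_gt0.
have step2 : E * (p * expR s + (1 - p)) <= ((1 - p) + p * expR (- s)) * (p * expR s + (1 - p)).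
  by apply: ler_wpM2r => //; nra.
apply: le_trans step2 _.
set C := (expR s + expR (- s)) / 2.
have C1 : 1 <= C.
  have := expR_ge1Dx s; have := expR_ge1Dx (- s); rewrite /C; lra.
have step3 : ((1 - p) + p * expR (- s)) * (p * expR s + (1 - p)) <= (1 + C) / 2.
  have -> : ((1 - p) + p * expR (- s)) * (p * expR s + (1 - p)) = 1 + 2 * p * (1 - p) * (C - 1).
    rewrite /C; have := es; move=> es'.
    transitivity ((1 - p) ^+ 2 + p ^+ 2 * (expR s * expR (- s)) + p * (1 - p) * (expR s + expR (- s))).
      ring.
    by rewrite es /C; field.
  have hh : 0 <= (C - 1) * (2 * p - 1) ^+ 2 by apply: mulr_ge0; [rewrite subr_ge0|apply: sqr_ge0].
  nra.
apply: le_trans step3 _.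
set v := expR (s / 2); set w := expR (- (s / 2)).
have v0 : 0 <= v by apply: ltW; apply: expR_gt0.
have w0 : 0 <= w by apply: ltW; apply: expR_gt0.
have vv : expR s = v * v by rewrite /v -expRD; congr expR; field.
have ww : expR (- s) = w * w by rewrite /w -expRD; congr expR; field.
have vw : v * w = 1 by rewrite /v /w -expRD subrr expR0.
have hc := cosh_le (s / 2).
have -> : (1 + C) / 2 = ((v + w) / 2) ^+ 2.
  rewrite /C vv ww; transitivity ((2 + v * v + w * w) / 4); first by field.
  have e2 : (2:R) = 2 * (v * w) by rewrite vw mulr1.
  rewrite [in LHS]e2; field; by [].
have -> : expR (s ^+ 2 / 4) = expR ((s / 2) ^+ 2 / 2) ^+ 2.
  by rewrite -expRM_natr; congr expR; field.
rewrite ler_sqr ?nnegrE; last by apply: ltW; apply: expR_gt0.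
  by rewrite ler_pdivrMr // mulrC.
by apply: divr_ge0 => //; apply: addr_ge0.
Qed.

Definition wb (p : R) (b : bool) : R := if b then p else 1 - p.

Lemma wb_ge0 p b : 0 <= p <= 1 -> 0 <= wb p b.
Proof. by case/andP=> ? ?; rewrite /wb; case: b => //; rewrite subr_ge0. Qed.

Lemma chernoff_fin (N : nat) (p q a sg : R) :
  0 <= p <= 1 -> 0 <= q <= 1 -> sg ^+ 2 = 1 -> 0 <= a ->
  \sum_(f : {ffun 'I_N -> bool * bool})
     (if sg * (\sum_(j < N) (((f j).1)%:R - ((f j).2)%:R) - N%:R * (p - q)) < - (N%:R * a)
      then \prod_(j < N) (wb p (f j).1 * wb q (f j).2) else 0)
  <= expR (- (N%:R * a ^+ 2 / 2)).
Proof.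
move=> hp hq hsg ha.
pose g (z : bool * bool) : R := (z.1%:R - p) - (z.2%:R - q).
pose F (z : bool * bool) : R := wb p z.1 * wb q z.2 * expR (- (a * sg) * g z).
have step1 : forall f : {ffun 'I_N -> bool * bool},
  (if sg * (\sum_(j < N) (((f j).1)%:R - ((f j).2)%:R) - N%:R * (p - q)) < - (N%:R * a)
      then \prod_(j < N) (wb p (f j).1 * wb q (f j).2) else 0)
  <= expR (- (N%:R * a ^+ 2)) * \prod_(j < N) F (f j).
  move=> f.
  have W0 : 0 <= \prod_(j < N) (wb p (f j).1 * wb q (f j).2).
    by apply: prodr_ge0 => j _; apply: mulr_ge0; apply: wb_ge0.
  have eqS : \sum_(j < N) (((f j).1)%:R - ((f j).2)%:R) - N%:R * (p - q) = \sum_(j < N) g (f j).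
    rewrite [RHS](eq_bigr (fun j => ((((f j).1)%:R - ((f j).2)%:R) - (p - q)))); last first.
      by move=> j _; rewrite /g; ring.
    by rewrite [RHS]sumrB sumr_const card_ord mulr_natl.
  have eqP : expR (- (N%:R * a ^+ 2)) * \prod_(j < N) F (f j) =
     \prod_(j < N) (wb p (f j).1 * wb q (f j).2) *
     expR (- a * (sg * (\sum_(j < N) g (f j)) + N%:R * a)).
    rewrite /F big_split /= -expR_sum mulrCA -expRD; congr (_ * expR _).
    rewrite -mulr_sumr; ring.
  rewrite eqP eqS; case: ifP => hlt.
    rewrite -[X in X <= _]mulr1; apply: (ler_wpM2l W0).
    have : 0 <= - a * (sg * \sum_(j < N) g (f j) + N%:R * a).
      rewrite mulNr -mulrN; apply: mulr_ge0 => //; lra.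
    move=> h; apply: le_trans (expR_ge1Dx _); lra.
  by apply: mulr_ge0 => //; apply: ltW; apply: expR_gt0.
apply: le_trans (ler_sum _ (fun f _ => step1 f)) _.
rewrite -mulr_sumr -(bigA_distr_bigA (fun (j : 'I_N) (z : bool * bool) => F z)) /=.
have Fxy : forall x y, F (x, y) = (wb p x * expR (- (a * sg) * (x%:R - p))) * (wb q y * expR ((a * sg) * (y%:R - q))).
  move=> x y; rewrite [RHS]mulrACA -expRD /F /g /=; congr (_ * expR _); ring.
have s2 : (- (a * sg)) ^+ 2 = a ^+ 2 /\ (a * sg) ^+ 2 = a ^+ 2.
  by rewrite sqrrN exprMn hsg mulr1.
have e0 : forall x : R, 0 <= expR x by move=> x; apply: ltW; apply: expR_gt0.
have inner : 0 <= \sum_(z : bool * bool) F z <= expR (a ^+ 2 / 2).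
  have -> : \sum_(z : bool * bool) F z =
    (p * expR (- (a * sg) * (1 - p)) + (1 - p) * expR (- (a * sg) * (0 - p))) *
    (q * expR ((a * sg) * (1 - q)) + (1 - q) * expR ((a * sg) * (0 - q))).
    rewrite -(pair_bigA _ (fun x y => F (x, y))) /= !big_bool /= !Fxy /wb /=. ring.
  have m1 := @mgf_bern p (- (a * sg)) hp.
  have m2 := @mgf_bern q (a * sg) hq.
  case/andP: hp => p0 p1; case/andP: hq => q0 q1.
  rewrite (proj1 s2) in m1; rewrite (proj2 s2) in m2.
  set A := (X in X * _); set B := (X in _ * X).
  have A0 : 0 <= A by rewrite /A; apply: addr_ge0; apply: mulr_ge0 => //; rewrite subr_ge0.
  have B0 : 0 <= B by rewrite /B; apply: addr_ge0; apply: mulr_ge0 => //; rewrite subr_ge0.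
  rewrite mulr_ge0 //=.
  have -> : a ^+ 2 / 2 = a ^+ 2 / 4 + a ^+ 2 / 4 by field.
  rewrite expRD; exact: ler_pM.
have hprod : \prod_(j < N) \sum_(z : bool * bool) F z <= expR (a ^+ 2 / 2) ^+ N.
  rewrite -[in leRHS](card_ord N) -prodr_const; apply: ler_prod => j _; exact: inner.
apply: le_trans (ler_wpM2l (e0 _) hprod) _.
by rewrite -expRM_natl -expRD ler_expR; nra.
Qed.

Lemma prob_bounds (d : measure_display) (X : measurableType d)
  (Q : probability X R) (A : set X) :
  measurable A -> 0 <= fine (Q A) <= 1.
Proof.
move=> mA; have h0 := measure_ge0 Q A; have h1 := probability_le1 Q mA.
apply/andP; split; first exact: fine_ge0.
by rewrite -lee_fin fineK ?fin_num_measure.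
Qed.

Lemma prob_C (d : measure_display) (X : measurableType d)
  (Q : probability X R) (A : set X) :
  measurable A -> fine (Q (~` A)) = 1 - fine (Q A).
Proof.
move=> mA; rewrite probability_setC //.
have h0 := measure_ge0 Q A; have h1 := probability_le1 Q mA.
by rewrite -[in LHS](fineK (fin_num_measure Q A mA)).
Qed.

Lemma emp_bounds (X : Type) (N : nat) (xs : 'I_N -> X) (h : X -> bool) :
  (0 < N)%N -> 0 <= (emp_prob xs h : R) <= 1.
Proof.
move=> N0; rewrite /emp_prob.
have Nr : 0 < N%:R :> R by rewrite ltr0n.
have s0 : 0 <= \sum_(j < N) (h (xs j))%:R :> R by apply: sumr_ge0 => j _; apply: ler0n.
have s1 : \sum_(j < N) (h (xs j))%:R <= \sum_(j < N) 1 :> R.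
  by apply: ler_sum => j _; case: (h (xs j)).
rewrite sumr_const card_ord in s1.
apply/andP; split; first by apply: divr_ge0 => //; apply: ltW.
by rewrite ler_pdivrMr // mul1r -[X in _ <= X]mulr1n.
Qed.

End S.

Theorem lemma7 (R : realType) (r K : nat) (dX dO : measure_display)
  (X : measurableType dX) (Omega : measurableType dO)
  (hp : 'rV[R]_r -> X -> bool)
  (Theta : 'I_K -> set 'rV[R]_r) (dims : 'I_K -> nat) (dTheta : nat)
  (PT PS : probability X R) (N : nat)
  (P : probability Omega R) (Ts Ss : 'I_N -> Omega -> X) (delta : R) :
  (1 < K)%N ->
  (0 < N)%N ->
  (forall th, (\bigcup_(i in [set: 'I_K]) Theta i) th ->
     measurable (Iset (hp th))) ->
  (forall i, is_VCdim (hclass hp (Theta i)) (dims i)) ->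
  is_VCdim (hclass hp (\bigcup_(i in [set: 'I_K]) Theta i)) dTheta ->
  iid_samples P Ts Ss PT PS ->
  0 < delta < 1 ->
  exists2 E : set Omega, measurable E &
    E `<=` [set w | Hdiv PT PS (hclass hp (\bigcup_(i in [set: 'I_K]) Theta i))
                    <= emp_Hdiv (fun j => Ts j w) (fun j => Ss j w)
                         (hclass hp (\bigcup_(i in [set: 'I_K]) Theta i))
                       + \big[Num.max/0]_(i < K)
                           (4 * Num.sqrt (((dims i)%:R * ln (2 * N%:R)
                                           + ln (2 * K%:R / delta))
                                          / (2 * N%:R)))]
    /\ ((1 - delta)%:E <= P E)%E.
Proof.
move=> K1 N0 Hmeas HVC HVCU Hiid /andP[d0 d1].
set U := \bigcup_(i in [set: 'I_K]) Theta i.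
set H := hclass hp U.
have Hm : forall h, H h -> measurable (Iset h).
  by move=> h [th Uth <-]; exact: Hmeas.
have [h1 Hh1] : exists h, H h.
  case: HVCU => [[s [_ _ sh]] _]; case: (sh (fun _ => true)) => h Hh _.
  by exists h.
have Nr : 0 < N%:R :> R by rewrite ltr0n.
have dd : 1 < delta^-1 by rewrite invf_gt1.
have lnd : 0 < ln (delta^-1) by apply: ln_gt0.
set M := \big[Num.max/0]_(i < K) _.
pose L := ln (2 * K%:R / delta).
pose a := Num.sqrt (2 * ln (delta^-1) / N%:R).
have a2ge : 0 <= 2 * ln (delta^-1) / N%:R by apply: divr_ge0; [lra|lra].
have a0 : 0 <= a by apply: sqrtr_ge0.
have a2 : a ^+ 2 = 2 * ln (delta^-1) / N%:R by rewrite sqr_sqrtr.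
have KK : 1 < 2 * K%:R :> R.
  have : (2 <= K)%N by []. rewrite -(ler_nat R) => h; lra.
have LL : ln (delta^-1) < L.
  rewrite /L mulrC lnM ?posrE //; last by lra.
  - rewrite ltrDl; exact: ln_gt0.
  - by rewrite invr_gt0.
have L0 : 0 <= L / (2 * N%:R) by apply: divr_ge0; lra.
have LM : 4 * Num.sqrt (L / (2 * N%:R)) <= M.
  have K0 : (0 < K)%N by apply: ltn_trans K1.
  apply: le_trans (le_bigmax _ _ (Ordinal K0)).
  have N1 : 1 <= N%:R :> R by rewrite ler1n.
  have lnN : 0 <= ln (2 * N%:R) :> R by apply: ln_ge0; lra.
  have L0' : 0 <= L by apply: ln_ge0; rewrite ler_pdivlMr //; nra.
  rewrite ler_pM2l // ler_sqrt; last first.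
    by apply: divr_ge0; [apply: addr_ge0 => //; apply: mulr_ge0 | lra].
  rewrite ler_pM2r ?invr_gt0 ?mulr_gt0 //; rewrite /L lerDr.
  by apply: mulr_ge0.
have aM : 2 * a < M.
  apply: lt_le_trans LM.
  rewrite -ltr_sqr ?nnegrE; first last.
  - by apply: mulr_ge0 => //; apply: sqrtr_ge0.
  - by apply: mulr_ge0.
  rewrite !exprMn a2 sqr_sqrtr //.
  rewrite (_ : 4 ^+ 2 * (L / (2 * N%:R)) = 2 ^+ 2 * (2 * L / N%:R)); last by field; lra.
  rewrite ltr_pM2l // ltr_pM2r ?invr_gt0 //; lra.
pose eta := M / 2 - a.
have eta0 : 0 < eta by rewrite /eta; lra.
pose Sset := [set `|fine (PT (Iset h)) - fine (PS (Iset h))| | h in H].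
have hsup : has_sup Sset.
  split; first by exists `|fine (PT (Iset h1)) - fine (PS (Iset h1))|, h1.
  exists 1 => y [h Hh <-].
  have := @prob_bounds R _ _ PT _ (Hm h Hh); have := @prob_bounds R _ _ PS _ (Hm h Hh).
  move=> /andP[? ?] /andP[? ?]; rewrite ler_norml; apply/andP; split; lra.
have [v [h0 Hh0 hv] hsv] := sup_adherent eta0 hsup.
set A0 := Iset h0.
have mA0 : measurable A0 := Hm h0 Hh0.
set p := fine (PT A0).
set q := fine (PS A0).
have hp' := @prob_bounds R _ _ PT _ mA0; have hq' := @prob_bounds R _ _ PS _ mA0.
pose sg : R := if q <= p then 1 else -1.
have sg2 : sg ^+ 2 = 1 by rewrite /sg; case: ifP => _; rewrite ?expr1n ?sqrrN ?expr1n.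
have sgpq : sg * (p - q) = `|p - q|.
  rewrite /sg; case: ifP => hpq.
    by rewrite mul1r ger0_norm // subr_ge0.
  by rewrite mulN1r ltr0_norm // subr_lt0 ltNge hpq.
have sgx : forall x, sg * x <= `|x|.
  move=> x; rewrite /sg; case: ifP => _; first by rewrite mul1r ler_norm.
  by rewrite mulN1r -normrN ler_norm.
pose Aset (b : bool) := if b then A0 else ~` A0.
have mAset : forall b, measurable (Aset b).
  by move=> [] /=; [exact: mA0 | exact: measurableC].
case: Hiid => mTs mSs Hprod.
pose ev (f : {ffun 'I_N -> bool * bool}) :=
  \bigcap_(j in [set: 'I_N]) (Ts j @^-1` Aset (f j).1) `&`
  \bigcap_(j in [set: 'I_N]) (Ss j @^-1` Aset (f j).2).
pose bad (f : {ffun 'I_N -> bool * bool}) :=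
  sg * (\sum_(j < N) (((f j).1)%:R - ((f j).2)%:R) - N%:R * (p - q)) < - (N%:R * a).
pose D := [set f | bad f].
pose B := \bigcup_(f in D) ev f.
have mev : forall f, measurable (ev f).
  move=> f; apply: measurableI; apply: fin_bigcap_measurable => // j _.
  - by rewrite -[X in measurable X]setTI; apply: mTs.
  - by rewrite -[X in measurable X]setTI; apply: mSs.
have mB : measurable B by apply: fin_bigcup_measurable => // f _.
exists (~` B); first exact: measurableC.
have Pev : forall f, P (ev f) = (\prod_(j < N) (@wb R p (f j).1 * @wb R q (f j).2))%:E.
  move=> f; rewrite /ev (Hprod (fun j => Aset (f j).1) (fun j => Aset (f j).2)) //.
  congr EFin; rewrite big_split /=.
  congr (_ * _); apply: eq_bigr => j _; rewrite /Aset /wb; case: (f j).1 => //=;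
    case: (f j).2 => //=; exact: (@prob_C R _ _ _ _ mA0).
have PB : (P B <= delta%:E)%E.
  have hs := @content_sub_fsum _ _ _ P _ D B ev finite_finset (fun f _ => mev f) mB (@subset_refl _ B).
  apply: le_trans hs _.
  rewrite (_ : (\sum_(f \in D) P (ev f) = \sum_(f <- index_enum {ffun 'I_N -> bool * bool} | bad f) P (ev f))%E); last first.
    rewrite [RHS]bigfs ?index_enum_uniq //; last by move=> f _; rewrite mem_index_enum.

  rewrite (eq_bigr (fun f : {ffun 'I_N -> bool * bool} => (\prod_(j < N) (@wb R p (f j).1 * @wb R q (f j).2))%:E)); last by move=> f _; exact: Pev.
  rewrite sumEFin lee_fin big_mkcond /=.
  apply: le_trans (@chernoff_fin R N p q a sg hp' hq' sg2 a0) _.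
  rewrite a2 (_ : N%:R * (2 * ln delta^-1 / N%:R) / 2 = ln delta^-1); last first.
    by field; apply/eqP; lra.
  by rewrite expRN lnK ?invrK // posrE invr_gt0.
split.
  move=> w /= nB.
  pose fw := [ffun j => (h0 (Ts j w), h0 (Ss j w))].
  have evw : ev fw w.
    split => j _ /=; rewrite ffunE /Aset /A0 /Iset /=.
      by case E: (h0 (Ts j w)) => //=; rewrite E.
    by case E: (h0 (Ss j w)) => //=; rewrite E.
  have nbad : ~~ bad fw by apply/negP => hb; apply: nB; exists fw.
  rewrite /bad -leNgt in nbad.
  pose eT : R := emp_prob (Ts^~ w) h0.
  pose eS : R := emp_prob (Ss^~ w) h0.
  have NN : N%:R != 0 :> R by rewrite pnatr_eq0 -lt0n.
  have eT' : \sum_(j < N) ((fw j).1)%:R = N%:R * eT.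
    rewrite /eT /emp_prob mulrC divfK //; apply: eq_bigr => j _; by rewrite ffunE.
  have eS' : \sum_(j < N) ((fw j).2)%:R = N%:R * eS.
    rewrite /eS /emp_prob mulrC divfK //; apply: eq_bigr => j _; by rewrite ffunE.
  rewrite sumrB eT' eS' in nbad.
  rewrite (_ : sg * (N%:R * eT - N%:R * eS - N%:R * (p - q)) = N%:R * (sg * ((eT - eS) - (p - q)))) in nbad; last by ring.
  rewrite -mulrN ler_pM2l // mulrBr sgpq in nbad.
  have sgE := sgx (eT - eS).
  have HeT := @emp_bounds R _ _ (Ts^~ w) h0 N0.
  have HeS := @emp_bounds R _ _ (Ss^~ w) h0 N0.
  pose Semp := [set `|(emp_prob (Ts^~ w) h : R) - emp_prob (Ss^~ w) h| | h in H].
  have hsupE : has_sup Semp.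
    split; first by exists `|(emp_prob (Ts^~ w) h1 : R) - emp_prob (Ss^~ w) h1|, h1.
    exists 1 => y [h Hh <-].
    have := @emp_bounds R _ _ (Ts^~ w) h N0; have := @emp_bounds R _ _ (Ss^~ w) h N0.
    move=> /andP[? ?] /andP[? ?]; rewrite ler_norml; apply/andP; split; lra.
  have ubE : `|eT - eS| <= sup Semp by apply: sup_upper_bound => //; exists h0.
  rewrite /Hdiv /emp_Hdiv -/Sset -/Semp.
  rewrite -hv in hsv.
  rewrite /eta in hsv.
  lra.
rewrite probability_setC //.
move: PB; rewrite -[P B](fineK (fin_num_measure P B mB)) lee_fin => PB'.
by rewrite -EFinB lee_fin; lra.
Qed.
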